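(* Let $\sigma$ be a 2-structure and $X\subsetneq V(\sigma)$ with $\sigma[X]$ prime; write $\overline{X}=V(\sigma)\setminus X$. Suppose Statement (S3) holds (there is no $Y\subseteq\overline{X}$ with $|Y|=3$ and $\sigma[X\cup Y]$ prime). Let $e,f\in E(\sigma)$ and $\alpha\in X$. If the outside graph $\Gamma_{(\sigma,\overline{X})}$ has no isolated vertices, then: (1) if $\langle X\rangle^{(e,f)}_\sigma\neq\emptyset$, then $\langle X\rangle^{(e',f')}_\sigma=\emptyset$ for all $e',f'\in E(\sigma)$ with $\{e',f'\}\neq\{e,f\}$; (2) if $X^{(e,f)}_\sigma(\alpha)\neq\emptyset$, then $X^{(e',f')}_\sigma(\alpha)=\emptyset$ for all $e',f'\in E(\sigma)$ with $\{e',f'\}\neq\{e,f\}$.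
   Context: A 2-structure $\sigma$ consists of a vertex set $V(\sigma)$ and an equivalence relation $\equiv_\sigma$ on ordered pairs of distinct vertices; $E(\sigma)$ is its set of classes; $\sigma[W]$ is the induced 2-structure on $W$. A module is a set $M$ such that for all $x,y\in M$ and $v\notin M$, $(x,v)\equiv_\sigma(y,v)$ and $(v,x)\equiv_\sigma(v,y)$; $\sigma$ is prime if $|V(\sigma)|\geq3$ and its only modules are $\emptyset$, $V(\sigma)$ and singletons. Given $\sigma[X]$ prime: $\langle X\rangle_\sigma=\{v\in\overline{X}: X\text{ is a module of }\sigma[X\cup\{v\}]\}$; for $\alpha\in X$, $X_\sigma(\alpha)=\{v\in\overline{X}:\{\alpha,v\}\text{ is a module of }\sigma[X\cup\{v\}]\}$. For $e,f\in E(\sigma)$: $\langle X\rangle^{(e,f)}_\sigma=\{v\in\langle X\rangle_\sigma:(v,\beta)\in e,(\beta,v)\in f\}$ for any $\beta\in X$ (independent of $\beta$); $X^{(e,f)}_\sigma(\alpha)=\{v\in X_\sigma(\alpha):(v,\alpha)\in e,(\alpha,v)\in f\}$. The outside graph $\Gamma_{(\sigma,\overline{X})}$ has vertex set $\overline{X}$ and edges the 2-element sets $Y\subseteq\overline{X}$ with $\sigma[X\cup Y]$ prime. *)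

(* Defs.v *)
(* plain Prop-valued sets (2-structures need not be finite). *)
Set Implicit Arguments.

Section TwoStructures.
Variable V : Type.

(* A 2-structure on the vertex set V: R x y u v means (x,y) ≡ (u,v).
   It must be an equivalence relation on ordered pairs of distinct vertices. *)
Definition is_2structure (R : V -> V -> V -> V -> Prop) : Prop :=
  (forall x y u v, R x y u v -> x <> y /\ u <> v) /\
  (forall x y, x <> y -> R x y x y) /\
  (forall x y u v, R x y u v -> R u v x y) /\
  (forall x y u v s t, R x y u v -> R u v s t -> R x y s t).

Variable R : V -> V -> V -> V -> Prop.

(* E(sigma): the equivalence classes, as relations on V (sets of ordered pairs) *)
Definition is_class (e : V -> V -> Prop) : Prop :=
  exists x y, x <> y /\ forall u v, e u v <-> R u v x y.

Definition same_class (e e' : V -> V -> Prop) : Prop :=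
  forall x y, e x y <-> e' x y.

Definition same_pair (e' f' e f : V -> V -> Prop) : Prop :=
  (same_class e' e /\ same_class f' f) \/ (same_class e' f /\ same_class f' e).

Definition is_module (W M : V -> Prop) : Prop :=
  (forall x, M x -> W x) /\
  forall x y v, M x -> M y -> W v -> ~ M v -> R x v y v /\ R v x v y.

Definition prime_on (W : V -> Prop) : Prop :=
  (exists a b c, W a /\ W b /\ W c /\ a <> b /\ a <> c /\ b <> c) /\
  forall M, is_module W M ->
    (forall x, ~ M x) \/ (forall x, M x <-> W x) \/
    (exists a, forall x, M x <-> x = a).

Definition setU1 (X : V -> Prop) (v : V) : V -> Prop := fun z => X z \/ z = v.

Definition extX (X : V -> Prop) (v : V) : Prop :=
  ~ X v /\ is_module (setU1 X v) X.

Definition extX_ef (X : V -> Prop) (e f : V -> V -> Prop) (v : V) : Prop :=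
  extX X v /\ forall b, X b -> e v b /\ f b v.

Definition partX (X : V -> Prop) (a v : V) : Prop :=
  ~ X v /\ is_module (setU1 X v) (fun z => z = a \/ z = v).

Definition partX_ef (X : V -> Prop) (e f : V -> V -> Prop) (a v : V) : Prop :=
  partX X a v /\ e v a /\ f a v.

Definition outside_edge (X : V -> Prop) (v w : V) : Prop :=
  ~ X v /\ ~ X w /\ v <> w /\ prime_on (fun z => X z \/ z = v \/ z = w).

Definition S3 (X : V -> Prop) : Prop :=
  ~ exists a b c, ~ X a /\ ~ X b /\ ~ X c /\ a <> b /\ a <> c /\ b <> c /\
      prime_on (fun z => X z \/ z = a \/ z = b \/ z = c).

Definition no_isolated (X : V -> Prop) : Prop :=
  forall v, ~ X v -> exists w, outside_edge X v w.

End TwoStructures.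

(* Main.v *)
Require Import Defs.
From Stdlib Require Import Classical.
Set Implicit Arguments.
Unset Strict Implicit.

Lemma mod_restr V (R : V->V->V->V->Prop) (W W' M M' : V -> Prop) :
  is_module R W M -> (forall z, M' z -> M z) -> (forall z, M' z -> W' z) ->
  (forall z, W' z -> W z) -> (forall z, W' z -> ~ M' z -> ~ M z) -> is_module R W' M'.
Proof.
  intros [_ H] h1 h2 h3 h4. split; [exact h2|].
  intros x y v hx hy hv hnv. apply H; auto.
Qed.

Lemma prime_ext V R (W W' : V -> Prop) : (forall z, W z <-> W' z) -> prime_on R W -> prime_on R W'.
Proof.
  intros hW [(a&b&c&ha&hb&hc&h1&h2&h3) hp]. split.
  - exists a, b, c. repeat split; try apply hW; auto.
  - intros M hM. pose proof hM as [hMs _].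
    assert (hM' : is_module R W M).
    { eapply mod_restr; [exact hM| | | |]; intros z; try (intros; apply hW; auto); auto. }
    destruct (hp M hM') as [H|[H|H]]; [left; exact H| right; left | right; right; exact H].
    intro x. rewrite H. apply hW.
Qed.

Lemma ext_prime V R (Y : V -> Prop) u :
  prime_on R Y -> ~ Y u -> ~ extX R Y u -> (forall b, Y b -> ~ partX R Y b u) ->
  prime_on R (setU1 Y u).
Proof.
  intros [(a&b&c&ha&hb&hc&h1&h2&h3) hp] hu hext hpart. split.
  - exists a, b, c. unfold setU1. tauto.
  - intros M hM.
    assert (hMY : is_module R Y (fun z => M z /\ Y z)).
    { destruct hM as [hMs hM]. split; [tauto|].
      intros x y v [hx _] [hy _] hv hnv. apply hM; [exact hx|exact hy|left; exact hv|tauto]. }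
    pose proof hM as [hMs hMm].
    destruct (hp _ hMY) as [H|[H|[be H]]].
    + destruct (classic (M u)) as [Mu|nMu].
      * right; right; exists u; intro x; split.
        -- intro hx; destruct (hMs x hx) as [hy|hy]; [exfalso; apply (H x); auto| exact hy].
        -- intros ->; auto.
      * left; intros x hx; destruct (hMs x hx) as [hy|hy]; [apply (H x); auto | subst; contradiction].
    + destruct (classic (M u)) as [Mu|nMu].
      * right; left. intro x; split; [apply hMs| intros [hy| ->]; [apply H; exact hy| exact Mu]].
      * exfalso; apply hext; split; auto.
        eapply mod_restr; [exact hM| | | |].
        -- intros z hz; apply H; exact hz.
        -- intros z hz; left; exact hz.
        -- auto.
        -- intros z [hz| ->] hn; [contradiction| exact nMu].
    + assert (hb' : M be /\ Y be) by (apply H; reflexivity).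
      destruct (classic (M u)) as [Mu|nMu].
      * exfalso; apply (hpart be); [tauto|]. split; auto.
        eapply mod_restr; [exact hM| | | |].
        -- intros z [->| ->]; tauto.
        -- intros z [->| ->]; [left; tauto| right; reflexivity].
        -- auto.
        -- intros z [hz| ->] hn hMz; [apply hn; left; apply H; auto| apply hn; right; reflexivity].
      * right; right; exists be; intro x; split.
        -- intro hx; destruct (hMs x hx) as [hy| ->]; [apply H; auto| contradiction].
        -- intros ->; tauto.
Qed.

Lemma Xminus_nm V R (X : V -> Prop) be : is_2structure R -> prime_on R X -> X be ->
  ~ (forall x y, X x -> X y -> x <> be -> y <> be -> R x be y be /\ R be x be y).
Proof.
  intros hR [(a&b&c&ha&hb&hc&h1&h2&h3) hp] hbe H.
  assert (hM : is_module R X (fun z => X z /\ z <> be)).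
  { split; [tauto|]. intros x y v [hx nx] [hy ny] hv hnv.
    assert (v = be) by (apply NNPP; tauto). subst v. apply H; auto. }
  destruct (hp _ hM) as [K|[K|[a0 K]]].
  - destruct (classic (a = be)) as [->|na].
    + apply (K b); split; [exact hb| intro; congruence].
    + apply (K a); auto.
  - apply (proj2 (proj2 (K be) hbe)); reflexivity.
  - destruct (classic (a = be)) as [->|na].
    + assert (b = a0) by (apply K; split; [exact hb| intro; congruence]).
      assert (c = a0) by (apply K; split; [exact hc| intro; congruence]). congruence.
    + destruct (classic (b = be)) as [->|nb].
      * assert (a = a0) by (apply K; auto). assert (c = a0) by (apply K; split; [exact hc| intro; congruence]). congruence.
      * assert (a = a0) by (apply K; auto). assert (b = a0) by (apply K; auto). congruence.
Qed.

Lemma pair_nm V R (X : V -> Prop) al be : is_2structure R -> prime_on R X -> X al -> X be -> al <> be ->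
  ~ (forall y, X y -> y <> al -> y <> be -> R al y be y /\ R y al y be).
Proof.
  intros hR [(a&b&c&ha&hb&hc&h1&h2&h3) hp] hal hbe hne H.
  destruct hR as (hd & hrf & hsy & htr).
  assert (hM : is_module R X (fun z => z = al \/ z = be)).
  { split; [intros z [->| ->]; auto|]. intros x y v hx hy hv hnv.
    assert (v <> al) by tauto. assert (v <> be) by tauto.
    pose proof (H v hv ltac:(auto) ltac:(auto)) as [p q].
    destruct hx as [->| ->]; destruct hy as [->| ->].
    all: first [ split; apply hrf; congruence | split; assumption | split; apply hsy; assumption ]. }
  destruct (hp _ hM) as [K|[K|[a0 K]]].
  - apply (K al); auto.
  - apply K in ha; apply K in hb; apply K in hc.
    destruct ha as [->| ->]; destruct hb as [->| ->]; destruct hc as [->| ->]; congruence.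
  - assert (al = a0) by (apply K; auto). assert (be = a0) by (apply K; auto). congruence.
Qed.

Lemma lemB V R (X : V -> Prop) be w : is_2structure R -> prime_on R X -> X be ->
  extX R X w -> partX R X be w -> False.
Proof.
  intros hR hX hbe [hw [_ hext]] [_ [_ hpart]].
  pose proof hR as (hd & hrf & hsy & htr).
  apply (Xminus_nm hR hX hbe). intros x y hx hy nx ny.
  assert (hxw : x <> w) by (intro; subst; contradiction).
  assert (hyw : y <> w) by (intro; subst; contradiction).
  destruct (hext x y w hx hy (or_intror eq_refl) hw) as [p1 p2].
  destruct (hpart be w x (or_introl eq_refl) (or_intror eq_refl) (or_introl hx) ltac:(tauto)) as [q1 q2].
  destruct (hpart be w y (or_introl eq_refl) (or_intror eq_refl) (or_introl hy) ltac:(tauto)) as [r1 r2].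
  split.
  - exact (htr _ _ _ _ _ _ q2 (htr _ _ _ _ _ _ p1 (hsy _ _ _ _ r2))).
  - exact (htr _ _ _ _ _ _ q1 (htr _ _ _ _ _ _ p2 (hsy _ _ _ _ r1))).
Qed.

Lemma lemC V R (X : V -> Prop) al be w : is_2structure R -> prime_on R X -> X al -> X be -> al <> be ->
  partX R X al w -> partX R X be w -> False.
Proof.
  intros hR hX hal hbe hne [hw [_ pa]] [_ [_ pb]].
  pose proof hR as (hd & hrf & hsy & htr).
  apply (pair_nm hR hX hal hbe hne). intros y hy na nb.
  assert (y <> w) by (intro; subst; contradiction).
  destruct (pa al w y (or_introl eq_refl) (or_intror eq_refl) (or_introl hy) ltac:(tauto)) as [p1 p2].
  destruct (pb be w y (or_introl eq_refl) (or_intror eq_refl) (or_introl hy) ltac:(tauto)) as [q1 q2].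
  split.
  - exact (htr _ _ _ _ _ _ p1 (hsy _ _ _ _ q1)).
  - exact (htr _ _ _ _ _ _ p2 (hsy _ _ _ _ q2)).
Qed.

Lemma lemD V R (X : V -> Prop) v v' : prime_on R X -> extX R X v -> extX R X v' ->
  prime_on R (fun z => X z \/ z = v \/ z = v') -> False.
Proof.
  intros [(a&b&c&ha&hb&hc&h1&h2&h3) _] [hv [_ ev]] [hv' [_ ev']] [_ hp].
  assert (hM : is_module R (fun z => X z \/ z = v \/ z = v') X).
  { split; [tauto|]. intros x y z hx hy hz hnz. destruct hz as [hz|[-> | ->]]; [contradiction| |].
    - apply ev; [exact hx|exact hy|right; reflexivity|exact hv].
    - apply ev'; [exact hx|exact hy|right; reflexivity|exact hv']. }
  destruct (hp _ hM) as [K|[K|[a0 K]]].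
  - exact (K a ha).
  - apply hv. apply K. right; left; reflexivity.
  - assert (a = a0) by (apply K; auto). assert (b = a0) by (apply K; auto). congruence.
Qed.

Lemma lemE V R (X : V -> Prop) al v v' : is_2structure R -> prime_on R X -> X al ->
  partX R X al v -> partX R X al v' ->
  prime_on R (fun z => X z \/ z = v \/ z = v') -> False.
Proof.
  intros hR [(a&b&c&ha&hb&hc&h1&h2&h3) _] hal [hv [_ pv]] [hv' [_ pv']] [_ hp].
  pose proof hR as (hd & hrf & hsy & htr).
  assert (key : forall x z, (x = al \/ x = v \/ x = v') -> X z -> z <> al -> R x z al z /\ R z x z al).
  { intros x z hx hz nz. assert (z <> v) by (intro; subst; contradiction).
    assert (z <> v') by (intro; subst; contradiction).
    destruct hx as [-> | [-> | ->]].
    - split; apply hrf; congruence.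
    - apply pv; [right; reflexivity | left; reflexivity | left; exact hz | tauto].
    - apply pv'; [right; reflexivity | left; reflexivity | left; exact hz | tauto]. }
  assert (hM : is_module R (fun z => X z \/ z = v \/ z = v') (fun z => z = al \/ z = v \/ z = v')).
  { split; [intros z [->|[->| ->]]; auto|].
    intros x y z hx hy hz hnz. destruct hz as [hz|[-> | ->]]; [|exfalso; tauto|exfalso; tauto].
    assert (nz : z <> al) by tauto.
    destruct (key x z hx hz nz) as [p1 p2]. destruct (key y z hy hz nz) as [q1 q2].
    split; [exact (htr _ _ _ _ _ _ p1 (hsy _ _ _ _ q1)) | exact (htr _ _ _ _ _ _ p2 (hsy _ _ _ _ q2))]. }
  destruct (hp _ hM) as [K|[K|[a0 K]]].
  - apply (K al); left; reflexivity.
  - destruct (classic (a = al)) as [->|na].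
    + assert (hbM : b = al \/ b = v \/ b = v') by (apply K; left; exact hb).
      destruct hbM as [?|[?|?]]; subst; [congruence|contradiction|contradiction].
    + assert (haM : a = al \/ a = v \/ a = v') by (apply K; left; exact ha).
      destruct haM as [?|[?|?]]; subst; [congruence|contradiction|contradiction].
  - assert (al = a0) by (apply K; auto). assert (v = a0) by (apply K; auto). subst. contradiction.
Qed.

Lemma extX_restr V R (X Y : V -> Prop) w : (forall z, X z -> Y z) -> extX R Y w -> extX R X w.
Proof.
  intros hXY [hw hm]. split; [auto|].
  eapply mod_restr; [exact hm | | | | ].
  - auto.
  - intros z hz; left; exact hz.
  - intros z [hz| ->]; [left; auto| right; reflexivity].
  - intros z [hz| ->] hn; [contradiction| exact hw].
Qed.

Lemma partX_restr V R (X Y : V -> Prop) b w : (forall z, X z -> Y z) -> ~ X w -> partX R Y b w -> X b -> partX R X b w.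
Proof.
  intros hXY hXw [hw hm] hb. split; [exact hXw|].
  eapply mod_restr; [exact hm | | | | ].
  - auto.
  - intros z [->| ->]; [left; exact hb| right; reflexivity].
  - intros z [hz| ->]; [left; auto| right; reflexivity].
  - auto.
Qed.

Lemma sc_of V R (e e' : V -> V -> Prop) a b c d : is_2structure R -> is_class R e -> is_class R e' ->
  e a b -> e' c d -> R a b c d -> same_class e e'.
Proof.
  intros (hd & hrf & hsy & htr) (x&y&_&he) (x'&y'&_&he') h1 h2 h3.
  apply he in h1. apply he' in h2.
  assert (k : R x y x' y') by exact (htr _ _ _ _ _ _ (hsy _ _ _ _ h1) (htr _ _ _ _ _ _ h3 h2)).
  intros p q. rewrite he, he'. split; intro h.
  - exact (htr _ _ _ _ _ _ h k).
  - exact (htr _ _ _ _ _ _ h (hsy _ _ _ _ k)).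
Qed.

Lemma L1 V R (X : V -> Prop) e f e' f' al v v' w :
  is_2structure R -> prime_on R X -> S3 R X -> X al ->
  is_class R e -> is_class R f -> is_class R e' -> is_class R f' ->
  extX_ef R X e f v -> extX_ef R X e' f' w -> outside_edge R X v v' ->
  ~ (same_class e' e /\ same_class f' f) ->
  R w v w al /\ R v w al w.
Proof.
  intros hR hX hS3 hal he hf he' hf' [hv hvef] [hw hwef] (nv & nv' & hvv' & hY) hnot.
  pose proof hR as (hd & hrf & hsy & htr).
  assert (hXY : forall z, X z -> (fun z => X z \/ z = v \/ z = v') z) by (intros z hz; left; exact hz).
  assert (nval : v <> al) by (intro; subst; contradiction).
  assert (nwv : w <> v).
  { intro; subst w. apply hnot. destruct (hvef al hal) as [a1 a2]. destruct (hwef al hal) as [b1 b2].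
    split; [exact (sc_of hR he' he b1 a1 (hrf _ _ nval)) | exact (sc_of hR hf' hf b2 a2 (hrf _ _ (not_eq_sym nval)))]. }
  assert (nwv' : w <> v').
  { intro; subst w. apply (lemD hX hv hw hY). }
  assert (nYw : ~ (fun z => X z \/ z = v \/ z = v') w).
  { intros [h|[h|h]]; [exact (proj1 hw h) | exact (nwv h) | exact (nwv' h)]. }
  destruct (classic (extX R (fun z => X z \/ z = v \/ z = v') w)) as [hext|hnext].
  - destruct hext as [_ [_ hm]].
    destruct (hm v al w (or_intror (or_introl eq_refl)) (or_introl hal) (or_intror eq_refl) nYw) as [p q].
    split; [exact q| exact p].
  - destruct (classic (exists b, (fun z => X z \/ z = v \/ z = v') b /\ partX R (fun z => X z \/ z = v \/ z = v') b w)) as [[b [hb hpb]]|hnp].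
    + exfalso. destruct hb as [hb|[-> | ->]].
      * apply (lemB hR hX hb hw). exact (partX_restr hXY (proj1 hw) hpb hb).
      * destruct hpb as [_ [_ hm]].
        destruct (hm v w al (or_introl eq_refl) (or_intror eq_refl) (or_introl (or_introl hal))
          ltac:(intros [h|h]; subst; first [contradiction | exact (proj1 hw hal)])) as [p q].
        apply hnot. destruct (hvef al hal) as [a1 a2]. destruct (hwef al hal) as [b1 b2].
        split; [exact (sc_of hR he' he b1 a1 (hsy _ _ _ _ p)) | exact (sc_of hR hf' hf b2 a2 (hsy _ _ _ _ q))].
      * destruct hpb as [_ [_ hm]].
        pose proof hw as [nw [_ hmw]].
        assert (hext' : extX R X v').
        { split; [exact nv'|]. split; [intros z hz; left; exact hz|].
          intros x y z hx hy hz hnz. destruct hz as [hz| ->]; [contradiction|].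
          assert (x <> v') by (intro; subst; contradiction).
          assert (y <> v') by (intro; subst; contradiction).
          assert (x <> w) by (intro; subst; contradiction).
          assert (y <> w) by (intro; subst; contradiction).
          destruct (hm v' w x (or_introl eq_refl) (or_intror eq_refl) (or_introl (or_introl hx)) ltac:(tauto)) as [p1 p2].
          destruct (hm v' w y (or_introl eq_refl) (or_intror eq_refl) (or_introl (or_introl hy)) ltac:(tauto)) as [q1 q2].
          destruct (hmw x y w hx hy (or_intror eq_refl) (proj1 hw)) as [r1 r2].
          split.
          - exact (htr _ _ _ _ _ _ p2 (htr _ _ _ _ _ _ r1 (hsy _ _ _ _ q2))).
          - exact (htr _ _ _ _ _ _ p1 (htr _ _ _ _ _ _ r2 (hsy _ _ _ _ q1))). }
        exact (lemD hX hv hext' hY).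
    + exfalso. apply hS3. exists v, v', w.
      assert (hP := ext_prime hY nYw hnext (fun b hb hp => hnp (ex_intro _ b (conj hb hp)))).
      assert (hP2 : prime_on R (fun z => X z \/ z = v \/ z = v' \/ z = w)).
      { eapply prime_ext; [|exact hP]. intro z; unfold setU1; tauto. }
      split; [exact nv|]. split; [exact nv'|]. split; [exact (proj1 hw)|].
      split; [exact hvv'|]. split; [auto|]. split; [auto|]. exact hP2.
Qed.

Lemma L2 V R (X : V -> Prop) e f e' f' al v v' w :
  is_2structure R -> prime_on R X -> S3 R X -> X al ->
  is_class R e -> is_class R f -> is_class R e' -> is_class R f' ->
  partX_ef R X e f al v -> partX_ef R X e' f' al w -> outside_edge R X v v' ->
  ~ (same_class e' e /\ same_class f' f) ->
  R w v al v /\ R v w v al.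
Proof.
  intros hR hX hS3 hal he hf he' hf' [hv [ev fv]] [hw [ew fw]] (nv & nv' & hvv' & hY) hnot.
  pose proof hR as (hd & hrf & hsy & htr).
  assert (hXY : forall z, X z -> (fun z => X z \/ z = v \/ z = v') z) by (intros z hz; left; exact hz).
  assert (nval : v <> al) by (intro; subst; contradiction).
  assert (nw : ~ X w) by exact (proj1 hw).
  assert (nwal : w <> al) by (intro; subst; contradiction).
  assert (nwv : w <> v).
  { intro; subst w. apply hnot.
    split; [exact (sc_of hR he' he ew ev (hrf _ _ nval)) | exact (sc_of hR hf' hf fw fv (hrf _ _ (not_eq_sym nval)))]. }
  assert (nwv' : w <> v').
  { intro; subst w. apply (lemE hR hX hal hv hw hY). }
  assert (nYw : ~ (fun z => X z \/ z = v \/ z = v') w).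
  { intros [h|[h|h]]; [exact (nw h) | exact (nwv h) | exact (nwv' h)]. }
  destruct (classic (exists b, (fun z => X z \/ z = v \/ z = v') b /\ partX R (fun z => X z \/ z = v \/ z = v') b w)) as [[b [hb hpb]]|hnp].
  - destruct hb as [hb|[-> | ->]].
    + destruct (classic (b = al)) as [-> | nb].
      * destruct hpb as [_ [_ hm]].
        destruct (hm w al v (or_intror eq_refl) (or_introl eq_refl) (or_introl (or_intror (or_introl eq_refl)))
          ltac:(intros [h|h]; [exact (nval h) | exact (nwv (eq_sym h))])) as [p q].
        split; assumption.
      * exfalso. apply (lemC hR hX hal hb (fun h => nb (eq_sym h)) hw).
        exact (partX_restr hXY nw hpb hb).
    + exfalso. destruct hpb as [_ [_ hm]].
      destruct (hm v w al (or_introl eq_refl) (or_intror eq_refl) (or_introl (or_introl hal))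
          ltac:(intros [h|h]; [exact (nval (eq_sym h)) | exact (nwal (eq_sym h))])) as [p q].
      apply hnot.
      split; [exact (sc_of hR he' he ew ev (hsy _ _ _ _ p)) | exact (sc_of hR hf' hf fw fv (hsy _ _ _ _ q))].
    + exfalso. destruct hpb as [_ [_ hm]].
      pose proof hw as [_ [_ hmw]].
      assert (hp' : partX R X al v').
      { split; [exact nv'|]. split; [intros z [->| ->]; [left; exact hal| right; reflexivity]|].
        intros x y z hx hy hz hnz. destruct hz as [hz| ->]; [|exfalso; apply hnz; right; reflexivity].
        assert (nz : z <> al) by tauto.
        assert (z <> v') by (intro; subst; contradiction).
        assert (z <> w) by (intro; subst; contradiction).
        assert (key : forall x, x = al \/ x = v' -> R x z al z /\ R z x z al).
        { intros x0 [-> | ->].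
          - split; apply hrf; congruence.
          - destruct (hm v' w z (or_introl eq_refl) (or_intror eq_refl) (or_introl (or_introl hz)) ltac:(tauto)) as [p1 p2].
            destruct (hmw w al z (or_intror eq_refl) (or_introl eq_refl) (or_introl hz) ltac:(tauto)) as [q1 q2].
            split; [exact (htr _ _ _ _ _ _ p1 q1) | exact (htr _ _ _ _ _ _ p2 q2)]. }
        destruct (key x hx) as [p1 p2]. destruct (key y hy) as [q1 q2].
        split; [exact (htr _ _ _ _ _ _ p1 (hsy _ _ _ _ q1)) | exact (htr _ _ _ _ _ _ p2 (hsy _ _ _ _ q2))]. }
      exact (lemE hR hX hal hv hp' hY).
  - destruct (classic (extX R (fun z => X z \/ z = v \/ z = v') w)) as [hext|hnext].
    + exfalso. exact (lemB hR hX hal (extX_restr hXY hext) hw).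
    + exfalso. apply hS3. exists v, v', w.
      assert (hP := ext_prime hY nYw hnext (fun b hb hp => hnp (ex_intro _ b (conj hb hp)))).
      assert (hP2 : prime_on R (fun z => X z \/ z = v \/ z = v' \/ z = w)).
      { eapply prime_ext; [|exact hP]. intro z; unfold setU1; tauto. }
      split; [exact nv|]. split; [exact nv'|]. split; [exact nw|].
      split; [exact hvv'|]. split; [auto|]. split; [auto|]. exact hP2.
Qed.

Theorem lemma3p6 (V : Type) (R : V -> V -> V -> V -> Prop) (X : V -> Prop)
  (hR : is_2structure R)
  (hXproper : exists v, ~ X v)
  (hXprime : prime_on R X)
  (hS3 : S3 R X)
  (e f : V -> V -> Prop) (he : is_class R e) (hf : is_class R f)
  (alpha : V) (halpha : X alpha)
  (hiso : no_isolated R X) :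
  ((exists v, extX_ef R X e f v) ->
     forall e' f', is_class R e' -> is_class R f' -> ~ same_pair e' f' e f ->
       forall v, ~ extX_ef R X e' f' v) /\
  ((exists v, partX_ef R X e f alpha v) ->
     forall e' f', is_class R e' -> is_class R f' -> ~ same_pair e' f' e f ->
       forall v, ~ partX_ef R X e' f' alpha v).
Proof.
  pose proof hR as (hd & hrf & hsy & htr).
  split.
  - intros [v hv] e' f' he' hf' hnsp w hw.
    assert (n1 : ~ (same_class e' e /\ same_class f' f)) by (intro H; apply hnsp; left; exact H).
    assert (n2 : ~ (same_class e e' /\ same_class f f')).
    { intros [k1 k2]; apply hnsp; left; split; intros x y; symmetry; [apply k1| apply k2]. }
    destruct (hiso v (proj1 (proj1 hv))) as [v' hv'].
    destruct (hiso w (proj1 (proj1 hw))) as [w' hw'].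
    destruct (L1 hR hXprime hS3 halpha he hf he' hf' hv hw hv' n1) as [p1 p2].
    destruct (L1 hR hXprime hS3 halpha he' hf' he hf hw hv hw' n2) as [q1 q2].
    destruct (proj2 hv alpha halpha) as [ev fv].
    destruct (proj2 hw alpha halpha) as [ew fw].
    apply hnsp; right; split.
    + exact (sc_of hR he' hf ew fv (htr _ _ _ _ _ _ (hsy _ _ _ _ p1) q2)).
    + exact (sc_of hR hf' he fw ev (htr _ _ _ _ _ _ (hsy _ _ _ _ p2) q1)).
  - intros [v hv] e' f' he' hf' hnsp w hw.
    assert (n1 : ~ (same_class e' e /\ same_class f' f)) by (intro H; apply hnsp; left; exact H).
    assert (n2 : ~ (same_class e e' /\ same_class f f')).
    { intros [k1 k2]; apply hnsp; left; split; intros x y; symmetry; [apply k1| apply k2]. }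
    destruct (hiso v (proj1 (proj1 hv))) as [v' hv'].
    destruct (hiso w (proj1 (proj1 hw))) as [w' hw'].
    destruct (L2 hR hXprime hS3 halpha he hf he' hf' hv hw hv' n1) as [p1 p2].
    destruct (L2 hR hXprime hS3 halpha he' hf' he hf hw hv hw' n2) as [q1 q2].
    destruct hv as [_ [ev fv]]. destruct hw as [_ [ew fw]].
    apply hnsp; right; split.
    + exact (sc_of hR he' hf ew fv (htr _ _ _ _ _ _ (hsy _ _ _ _ q2) p1)).
    + exact (sc_of hR hf' he fw ev (htr _ _ _ _ _ _ (hsy _ _ _ _ q1) p2)).
Qed.
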